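(* Let $X\neq\{0\}$ be a normed space. (i) If $X$ satisfies the $t$-Hanner inequality for some $1<t\le2$, then $K^*_{q,t}(X)=C^*(q,t)$ for every $2\le q<\infty$, and $K_{t,p}(X)=1$ for every $1<p\le t'$, where $\frac1t+\frac1{t'}=1$. (ii) If $X$ satisfies the $r$-Hanner inequality for some $2\le r<\infty$, then $K_{p,r}(X)=C(p,r)$ for every $1<p\le2$, and $K^*_{r,q}(X)=1$ for every $r'\le q<\infty$, where $\frac1r+\frac1{r'}=1$.
   Context: For $1<t\le2$, a normed space $X$ satisfies the $t$-Hanner inequality if $\|x+y\|^t+\|x-y\|^t\ge(\|x\|+\|y\|)^t+\big|\|x\|-\|y\|\big|^t$ for all $x,y\in X$; for $2\le r<\infty$, it satisfies the $r$-Hanner inequality if $\|x+y\|^r+\|x-y\|^r\le(\|x\|+\|y\|)^r+\big|\|x\|-\|y\|\big|^r$ for all $x,y\in X$. For a normed space $X$: for $1<t\le2$ and $1<p<\infty$, $K_{t,p}(X)$ is the smallest constant $K\ge0$ such that $\big(\frac{\|x+y\|^p+\|x-y\|^p}{2}\big)^{1/p}\le(\|x\|^t+\|Ky\|^t)^{1/t}$ for all $x,y\in X$; for $2\le r<\infty$ and $1<q<\infty$, $K^*_{r,q}(X)$ is the smallest constant $K>0$ such that $\big(\frac{\|x+y\|^q+\|x-y\|^q}{2}\big)^{1/q}\ge(\|x\|^r+\|K^{-1}y\|^r)^{1/r}$ for all $x,y\in X$. $C(t,p):=K_{t,p}(\mathbb C)$ and $C^*(r,q):=K^*_{r,q}(\mathbb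 C)$, i.e. the same best constants for $X=\mathbb C$ with the absolute value. *)

(* Defs.v *)
From Stdlib Require Import Reals Lra.
Open Scope R_scope.

(** Real normed spaces.  (A complex normed space is in particular a real one,
    and all notions below only use +, -, real scalars and the norm.) *)
Record NormedSpace := {
  carrier :> Type;
  vzero : carrier;
  vadd : carrier -> carrier -> carrier;
  vopp : carrier -> carrier;
  vscal : R -> carrier -> carrier;
  vnorm : carrier -> R;
  vadd_assoc : forall x y z, vadd x (vadd y z) = vadd (vadd x y) z;
  vadd_comm : forall x y, vadd x y = vadd y x;
  vadd_0 : forall x, vadd x vzero = x;
  vadd_opp : forall x, vadd x (vopp x) = vzero;
  vscal_1 : forall x, vscal 1 x = x;
  vscal_assoc : forall a b x, vscal a (vscal b x) = vscal (a * b) x;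
  vscal_distr_l : forall a x y, vscal a (vadd x y) = vadd (vscal a x) (vscal a y);
  vscal_distr_r : forall a b x, vscal (a + b) x = vadd (vscal a x) (vscal b x);
  vnorm_eq0 : forall x, vnorm x = 0 -> x = vzero;
  vnorm_scal : forall a x, vnorm (vscal a x) = Rabs a * vnorm x;
  vnorm_triangle : forall x y, vnorm (vadd x y) <= vnorm x + vnorm y
}.

Definition vsub (X : NormedSpace) (x y : X) : X := vadd X x (vopp X y).

(** Real power x^a for x >= 0 and a > 0, with 0^a = 0
    (Stdlib's Rpower is only meaningful for x > 0). *)
Definition rpow (x a : R) : R := if Rle_dec x 0 then 0 else Rpower x a.

Definition Cc := (R * R)%type.
Definition cadd (z w : Cc) : Cc := (fst z + fst w, snd z + snd w).
Definition csub (z w : Cc) : Cc := (fst z - fst w, snd z - snd w).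
Definition cscal (a : R) (z : Cc) : Cc := (a * fst z, a * snd z).
Definition cabs (z : Cc) : R := sqrt (fst z * fst z + snd z * snd z).

Definition hanner_t (X : NormedSpace) (t : R) : Prop :=
  forall x y : X,
    rpow (vnorm X (vadd X x y)) t + rpow (vnorm X (vsub X x y)) t >=
    rpow (vnorm X x + vnorm X y) t + rpow (Rabs (vnorm X x - vnorm X y)) t.

Definition hanner_r (X : NormedSpace) (r : R) : Prop :=
  forall x y : X,
    rpow (vnorm X (vadd X x y)) r + rpow (vnorm X (vsub X x y)) r <=
    rpow (vnorm X x + vnorm X y) r + rpow (Rabs (vnorm X x - vnorm X y)) r.

(** Validity of a constant K, stated generically over the operations
    (plus, minus, real scaling, norm) so that it applies both to a normed
    space X and to C with the absolute value. *)
Definition K_valid {V : Type} (add sub : V -> V -> V) (scal : R -> V -> V)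
  (nrm : V -> R) (t p K : R) : Prop :=
  forall x y : V,
    rpow ((rpow (nrm (add x y)) p + rpow (nrm (sub x y)) p) / 2) (1 / p) <=
    rpow (rpow (nrm x) t + rpow (nrm (scal K y)) t) (1 / t).

Definition Kstar_valid {V : Type} (add sub : V -> V -> V) (scal : R -> V -> V)
  (nrm : V -> R) (r q K : R) : Prop :=
  forall x y : V,
    rpow ((rpow (nrm (add x y)) q + rpow (nrm (sub x y)) q) / 2) (1 / q) >=
    rpow (rpow (nrm x) r + rpow (nrm (scal (/ K) y)) r) (1 / r).

Definition is_best_K {V : Type} (add sub : V -> V -> V) (scal : R -> V -> V)
  (nrm : V -> R) (t p k : R) : Prop :=
  0 <= k /\ K_valid add sub scal nrm t p k /\
  forall k', 0 <= k' -> K_valid add sub scal nrm t p k' -> k <= k'.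

Definition is_best_Kstar {V : Type} (add sub : V -> V -> V) (scal : R -> V -> V)
  (nrm : V -> R) (r q k : R) : Prop :=
  0 < k /\ Kstar_valid add sub scal nrm r q k /\
  forall k', 0 < k' -> Kstar_valid add sub scal nrm r q k' -> k <= k'.

Definition is_K_tp (X : NormedSpace) (t p k : R) : Prop :=
  is_best_K (vadd X) (vsub X) (vscal X) (vnorm X) t p k.
Definition is_Kstar_rq (X : NormedSpace) (r q k : R) : Prop :=
  is_best_Kstar (vadd X) (vsub X) (vscal X) (vnorm X) r q k.
Definition is_C (t p k : R) : Prop := is_best_K cadd csub cscal cabs t p k.
Definition is_Cstar (r q k : R) : Prop := is_best_Kstar cadd csub cscal cabs r q k.

(* Main.v *)
Require Import Defs.
From Stdlib Require Import Reals Lra Psatz.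
Open Scope R_scope.

Lemma Rpower_gt0 x a : 0 < Rpower x a.
Proof. unfold Rpower; apply exp_pos. Qed.

Lemma rpow_pos x a : 0 < x -> rpow x a = Rpower x a.
Proof. intro H. unfold rpow. destruct (Rle_dec x 0); [lra| reflexivity]. Qed.

Lemma rpow_le0 x a : x <= 0 -> rpow x a = 0.
Proof. intro H; unfold rpow; destruct (Rle_dec x 0); [reflexivity|lra]. Qed.

Lemma rpow_0 a : rpow 0 a = 0.
Proof. apply rpow_le0; lra. Qed.

Lemma rpow_nonneg x a : 0 <= rpow x a.
Proof. unfold rpow; destruct (Rle_dec x 0); [lra| left; apply Rpower_gt0]. Qed.

Lemma rpow_gt0 x a : 0 < x -> 0 < rpow x a.
Proof. intro H; rewrite rpow_pos; auto; apply Rpower_gt0. Qed.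

Lemma rpow_1 x : 0 <= x -> rpow x 1 = x.
Proof. intros [H|H]. rewrite rpow_pos; auto; apply Rpower_1; auto. subst; apply rpow_0. Qed.

Lemma rpow_one a : rpow 1 a = 1.
Proof. rewrite rpow_pos by lra. unfold Rpower. rewrite ln_1, Rmult_0_r. apply exp_0. Qed.

Lemma rpow_mult x y a : 0 <= x -> 0 <= y -> rpow (x*y) a = rpow x a * rpow y a.
Proof.
  intros [Hx|Hx] [Hy|Hy].
  - rewrite !rpow_pos; try nra. rewrite Rpower_mult_distr; auto.
  - subst. rewrite Rmult_0_r, !rpow_0; ring.
  - subst. rewrite Rmult_0_l, !rpow_0; ring.
  - subst. rewrite Rmult_0_l, !rpow_0; ring.
Qed.

Lemma rpow_rpow x a b : 0 <= x -> rpow (rpow x a) b = rpow x (a*b).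
Proof.
  intros [Hx|Hx].
  - rewrite (rpow_pos x a) by auto. rewrite rpow_pos by apply Rpower_gt0.
    rewrite rpow_pos by auto. apply Rpower_mult.
  - subst. rewrite !rpow_0; reflexivity.
Qed.

Lemma rpow_plus x a b : 0 <= x -> rpow x (a+b) = rpow x a * rpow x b.
Proof.
  intros [Hx|Hx].
  - rewrite !rpow_pos by auto. apply Rpower_plus.
  - subst. rewrite !rpow_0; ring.
Qed.

Lemma rpow_le x y a : 0 <= x <= y -> 0 < a -> rpow x a <= rpow y a.
Proof.
  intros [[Hx|Hx] Hxy] Ha.
  - rewrite !rpow_pos by lra. apply Rle_Rpower_l; lra.
  - subst. rewrite rpow_0. apply rpow_nonneg.
Qed.

Lemma rpow_lt x y a : 0 <= x < y -> 0 < a -> rpow x a < rpow y a.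
Proof.
  intros [[Hx|Hx] Hxy] Ha.
  - rewrite !rpow_pos by lra. apply Rlt_Rpower_l; lra.
  - subst. rewrite rpow_0. apply rpow_gt0; lra.
Qed.

Lemma rpow_le_inv x y a : 0 <= x -> 0 <= y -> 0 < a -> rpow x a <= rpow y a -> x <= y.
Proof.
  intros Hx Hy Ha H. destruct (Rle_lt_dec x y) as [h|h]; auto.
  assert (rpow y a < rpow x a) by (apply rpow_lt; lra). lra.
Qed.

Lemma rpow_inv x a : 0 <= x -> a <> 0 -> rpow (rpow x a) (/a) = x.
Proof.
  intros Hx Ha. rewrite rpow_rpow by auto. rewrite Rinv_r by auto. apply rpow_1; auto.
Qed.

Lemma rpow_div x y a : 0 <= x -> 0 < y -> rpow (x / y) a = rpow x a / rpow y a.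
Proof.
  intros Hx Hy. unfold Rdiv. rewrite rpow_mult; [|auto| left; apply Rinv_0_lt_compat; auto].
  f_equal. rewrite !rpow_pos; [| auto | apply Rinv_0_lt_compat; auto].
  unfold Rpower. rewrite ln_Rinv by auto. rewrite <- exp_Ropp. f_equal; ring.
Qed.

Lemma rpow_eq0 x a : 0 <= x -> rpow x a = 0 -> x = 0.
Proof. intros [H|H] E; auto. pose proof (rpow_gt0 x a H); lra. Qed.

Lemma Rpower_base_le1 s g g' : 0 < s <= 1 -> g <= g' -> Rpower s g' <= Rpower s g.
Proof.
  intros Hs Hg. unfold Rpower. 
  assert (ln s <= 0).
  { destruct (Req_dec s 1) as [->|n]. rewrite ln_1; lra.
    left. rewrite <- ln_1. apply ln_increasing; lra. }
  destruct (Req_dec (g' * ln s) (g * ln s)) as [e|n]. rewrite e; lra.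
  left. apply exp_increasing. nra.
Qed.

Lemma ln_le a b : 0 < a -> a <= b -> ln a <= ln b.
Proof. intros Ha [H|H]. left; apply ln_increasing; auto. subst; lra. Qed.

Lemma Rpower_negexp_anti x y g : 0 < x <= y -> g <= 0 -> Rpower y g <= Rpower x g.
Proof.
  intros Hxy Hg. unfold Rpower. pose proof (ln_le x y ltac:(lra) ltac:(lra)).
  destruct (Req_dec (g * ln y) (g * ln x)) as [e|n]. rewrite e; lra.
  left; apply exp_increasing. nra.
Qed.

Lemma Rpower_posexp_mono x y g : 0 < x <= y -> 0 <= g -> Rpower x g <= Rpower y g.
Proof.
  intros Hxy Hg. unfold Rpower. pose proof (ln_le x y ltac:(lra) ltac:(lra)).
  destruct (Req_dec (g * ln y) (g * ln x)) as [e|n]. rewrite e; lra.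
  left; apply exp_increasing. nra.
Qed.

Lemma rpow_frac u d g : 0 < u -> 0 < d ->
  rpow u g + rpow d g = rpow (u+d) g * (rpow (u/(u+d)) g + rpow (d/(u+d)) g).
Proof.
  intros Hu Hd. rewrite !rpow_div by lra.
  assert (0 < rpow (u+d) g) by (apply rpow_gt0; lra).
  field. lra.
Qed.

Lemma subadd u d g : 0 < g <= 1 -> 0 <= u -> 0 <= d ->
  rpow (u+d) g <= rpow u g + rpow d g.
Proof.
  intros Hg [Hu|Hu] [Hd|Hd]; try (subst; rewrite ?Rplus_0_l, ?Rplus_0_r, ?rpow_0; lra).
  rewrite rpow_frac by auto.
  assert (0 < rpow (u+d) g) by (apply rpow_gt0; lra).
  assert (u/(u+d) <= rpow (u/(u+d)) g).
  { assert (0 < u/(u+d) <= 1) by (split; [apply Rdiv_lt_0_compat; lra| apply Rmult_le_reg_r with (u+d); [lra|]; field_simplify; lra]).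
    rewrite rpow_pos by lra. rewrite <- (Rpower_1 (u/(u+d))) at 1 by lra. apply Rpower_base_le1; lra. }
  assert (d/(u+d) <= rpow (d/(u+d)) g).
  { assert (0 < d/(u+d) <= 1) by (split; [apply Rdiv_lt_0_compat; lra| apply Rmult_le_reg_r with (u+d); [lra|]; field_simplify; lra]).
    rewrite rpow_pos by lra. rewrite <- (Rpower_1 (d/(u+d))) at 1 by lra. apply Rpower_base_le1; lra. }
  assert (u/(u+d) + d/(u+d) = 1) by (field; lra).
  nra.
Qed.

Lemma superadd u d g : 1 <= g -> 0 <= u -> 0 <= d ->
  rpow u g + rpow d g <= rpow (u+d) g.
Proof.
  intros Hg [Hu|Hu] [Hd|Hd]; try (subst; rewrite ?Rplus_0_l, ?Rplus_0_r, ?rpow_0; lra).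
  rewrite rpow_frac by auto.
  assert (0 < rpow (u+d) g) by (apply rpow_gt0; lra).
  assert (rpow (u/(u+d)) g <= u/(u+d)).
  { assert (0 < u/(u+d) <= 1) by (split; [apply Rdiv_lt_0_compat; lra| apply Rmult_le_reg_r with (u+d); [lra|]; field_simplify; lra]).
    rewrite rpow_pos by lra. rewrite <- (Rpower_1 (u/(u+d))) at 2 by lra. apply Rpower_base_le1; lra. }
  assert (rpow (d/(u+d)) g <= d/(u+d)).
  { assert (0 < d/(u+d) <= 1) by (split; [apply Rdiv_lt_0_compat; lra| apply Rmult_le_reg_r with (u+d); [lra|]; field_simplify; lra]).
    rewrite rpow_pos by lra. rewrite <- (Rpower_1 (d/(u+d))) at 2 by lra. apply Rpower_base_le1; lra. }
  assert (u/(u+d) + d/(u+d) = 1) by (field; lra).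
  nra.
Qed.

Lemma deriv_shift_pow d g x : 0 < x + d ->
  derivable_pt_lim (fun u => Rpower (u + d) g) x (g * Rpower (x + d) (g - 1)).
Proof.
  intro H.
  replace (g * Rpower (x + d) (g - 1)) with ((g * Rpower (x + d) (g - 1)) * 1) by ring.
  apply (derivable_pt_lim_comp (fun u => u + d) (fun v => Rpower v g)).
  - replace 1 with (1 + 0) by ring. apply derivable_pt_lim_plus.
    apply derivable_pt_lim_id. apply derivable_pt_lim_const.
  - apply derivable_pt_lim_power; auto.
Qed.

Lemma incr_mvt u1 u2 d g : 0 < u1 < u2 -> 0 <= d ->
  exists c, u1 < c < u2 /\
   (rpow (u2+d) g - rpow u2 g) - (rpow (u1+d) g - rpow u1 g)
   = g * (Rpower (c+d) (g-1) - Rpower c (g-1)) * (u2 - u1).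
Proof.
  intros Hu Hd.
  destruct (MVT_cor2 (fun u => Rpower (u+d) g - Rpower u g)
             (fun c => g * (Rpower (c+d) (g-1) - Rpower c (g-1))) u1 u2) as [c [Hc Ic]].
  - lra.
  - intros c Hc. replace (g * (Rpower (c+d) (g-1) - Rpower c (g-1))) with
      (g * Rpower (c+d) (g-1) - g * Rpower c (g-1)) by ring.
    apply derivable_pt_lim_minus. apply deriv_shift_pow; lra.
    apply derivable_pt_lim_power; lra.
  - exists c. split; auto. rewrite !rpow_pos by lra. simpl in Hc. rewrite <- Hc. ring.
Qed.

Lemma ID_concave u1 u2 d g : 0 < g <= 1 -> 0 <= u1 <= u2 -> 0 <= d ->
  rpow (u2+d) g - rpow u2 g <= rpow (u1+d) g - rpow u1 g.
Proof.
  intros Hg [[H1|H1] H12] Hd.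
  - destruct H12 as [H12|H12]; [|subst; lra].
    destruct (incr_mvt u1 u2 d g) as [c [Hc E]]; try lra.
    assert (Rpower (c+d) (g-1) <= Rpower c (g-1)) by (apply Rpower_negexp_anti; lra).
    assert (0 <= g * (Rpower c (g-1) - Rpower (c+d) (g-1)) * (u2 - u1)).
    { apply Rmult_le_pos; [|lra]. apply Rmult_le_pos; lra. }
    lra.
  - subst. rewrite Rplus_0_l, rpow_0. pose proof (subadd u2 d g Hg ltac:(lra) Hd). lra.
Qed.

Lemma ID_convex u1 u2 d g : 1 <= g -> 0 <= u1 <= u2 -> 0 <= d ->
  rpow (u1+d) g - rpow u1 g <= rpow (u2+d) g - rpow u2 g.
Proof.
  intros Hg [[H1|H1] H12] Hd.
  - destruct H12 as [H12|H12]; [|subst; lra].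
    destruct (incr_mvt u1 u2 d g) as [c [Hc E]]; try lra.
    assert (Rpower c (g-1) <= Rpower (c+d) (g-1)) by (apply Rpower_posexp_mono; lra).
    assert (0 <= g * (Rpower (c+d) (g-1) - Rpower c (g-1)) * (u2 - u1)).
    { apply Rmult_le_pos; [|lra]. apply Rmult_le_pos; lra. }
    lra.
  - subst. rewrite Rplus_0_l, rpow_0. pose proof (superadd u2 d g Hg ltac:(lra) Hd). lra.
Qed.

Lemma maj_concave A B c g : 0 < g <= 1 -> Rabs c <= B -> B <= A ->
  rpow (A+B) g + rpow (A-B) g <= rpow (A+c) g + rpow (A-c) g.
Proof.
  intros Hg Hc HB.
  assert (Hc0 : 0 <= Rabs c) by apply Rabs_pos.
  assert (E : rpow (A+c) g + rpow (A-c) g = rpow (A+Rabs c) g + rpow (A-Rabs c) g).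
  { unfold Rabs; destruct (Rcase_abs c); [|reflexivity].
    replace (A - - c) with (A + c) by ring. replace (A + - c) with (A - c) by ring. lra. }
  rewrite E.
  pose proof (ID_concave (A-B) (A+Rabs c) (B - Rabs c) g Hg ltac:(lra) ltac:(lra)) as H.
  replace (A + Rabs c + (B - Rabs c)) with (A+B) in H by ring.
  replace (A - B + (B - Rabs c)) with (A - Rabs c) in H by ring. lra.
Qed.

Lemma maj_convex A B c g : 1 <= g -> Rabs c <= B -> B <= A ->
  rpow (A+c) g + rpow (A-c) g <= rpow (A+B) g + rpow (A-B) g.
Proof.
  intros Hg Hc HB.
  assert (Hc0 : 0 <= Rabs c) by apply Rabs_pos.
  assert (E : rpow (A+c) g + rpow (A-c) g = rpow (A+Rabs c) g + rpow (A-Rabs c) g).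
  { unfold Rabs; destruct (Rcase_abs c); [|reflexivity].
    replace (A - - c) with (A + c) by ring. replace (A + - c) with (A - c) by ring. lra. }
  rewrite E.
  pose proof (ID_convex (A-B) (A+Rabs c) (B - Rabs c) g Hg ltac:(lra) ltac:(lra)) as H.
  replace (A + Rabs c + (B - Rabs c)) with (A+B) in H by ring.
  replace (A - B + (B - Rabs c)) with (A - Rabs c) in H by ring. lra.
Qed.

Lemma midpoint_convex X Y g : 1 <= g -> 0 <= X -> 0 <= Y ->
  rpow ((X+Y)/2) g <= (rpow X g + rpow Y g)/2.
Proof.
  intros Hg HX HY.
  destruct (Rle_dec X Y) as [h|h].
  - pose proof (ID_convex X ((X+Y)/2) ((Y-X)/2) g Hg ltac:(lra) ltac:(lra)) as H.
    replace (X + (Y-X)/2) with ((X+Y)/2) in H by field.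
    replace ((X+Y)/2 + (Y-X)/2) with Y in H by field. lra.
  - pose proof (ID_convex Y ((X+Y)/2) ((X-Y)/2) g Hg ltac:(lra) ltac:(lra)) as H.
    replace (Y + (X-Y)/2) with ((X+Y)/2) in H by field.
    replace ((X+Y)/2 + (X-Y)/2) with X in H by field. lra.
Qed.

Lemma power_mean U V p p' : 0 < p <= p' -> 0 <= U -> 0 <= V ->
  rpow ((rpow U p + rpow V p)/2) (1/p) <= rpow ((rpow U p' + rpow V p')/2) (1/p').
Proof.
  intros Hp HU HV.
  set (X := rpow U p). set (Y := rpow V p).
  assert (HX : 0 <= X) by apply rpow_nonneg. assert (HY : 0 <= Y) by apply rpow_nonneg.
  assert (EU : rpow U p' = rpow X (p'/p)) by (unfold X; rewrite rpow_rpow by auto; f_equal; field; lra).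
  assert (EV : rpow V p' = rpow Y (p'/p)) by (unfold Y; rewrite rpow_rpow by auto; f_equal; field; lra).
  rewrite EU, EV.
  assert (H : rpow ((X+Y)/2) (p'/p) <= (rpow X (p'/p) + rpow Y (p'/p))/2).
  { apply midpoint_convex; auto. apply Rmult_le_reg_r with p; [lra|]. field_simplify; lra. }
  assert (H2 : rpow (rpow ((X+Y)/2) (p'/p)) (1/p') <= rpow ((rpow X (p'/p) + rpow Y (p'/p))/2) (1/p')).
  { apply rpow_le; [split; [apply rpow_nonneg| exact H] | apply Rdiv_lt_0_compat; lra]. }
  rewrite rpow_rpow in H2 by lra. replace (p'/p * (1/p')) with (1/p) in H2 by (field; lra). exact H2.
Qed.

Lemma deriv_aff_pow a b g x : 0 < a + b*x ->
  derivable_pt_lim (fun w => Rpower (a + b*w) g) x (g * Rpower (a+b*x) (g-1) * b).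
Proof.
  intro H.
  apply (derivable_pt_lim_comp (fun w => a + b*w) (fun v => Rpower v g)).
  - pose proof (derivable_pt_lim_plus (fun _ => a) (mult_real_fct b id) x 0 (b*1)
       (derivable_pt_lim_const a x) (derivable_pt_lim_scal id b x 1 (derivable_pt_lim_id x))) as D.
    replace (0 + b*1) with b in D by ring. exact D.
  - apply derivable_pt_lim_power; auto.
Qed.

Lemma Rpower_base_lt1 s g : 0 < s < 1 -> 1 < g -> Rpower s g < s.
Proof.
  intros Hs Hg. rewrite <- (Rpower_1 s) at 2 by lra. unfold Rpower.
  assert (ln s < 0) by (rewrite <- ln_1; apply ln_increasing; lra).
  apply exp_increasing. nra.
Qed.

Lemma Rpower_split1 x g : 0 < x -> Rpower x g = x * Rpower x (g - 1).
Proof. intro H. replace g with (1 + (g-1)) at 1 by ring. rewrite Rpower_plus, Rpower_1; auto. Qed.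

Lemma Rpower_div x y g : 0 < x -> 0 < y -> Rpower (x / y) g = Rpower x g / Rpower y g.
Proof.
  intros Hx Hy. pose proof (rpow_div x y g ltac:(lra) Hy) as H.
  rewrite !rpow_pos in H; auto. apply Rdiv_lt_0_compat; auto.
Qed.

Lemma clarkson_inner P y : 1 < P <= 2 -> 0 < y < 1 ->
  Rpower (1 + Rpower y (P/(P-1))) (P-1) <= (Rpower (1+y) P + Rpower (1-y) P)/2.
Proof.
  intros HP Hy.
  set (Q := P/(P-1)). set (r := P - 1).
  assert (Hr : 0 < r <= 1) by (unfold r; lra).
  assert (HQ : 1 < Q) by (unfold Q; apply Rmult_lt_reg_r with (P-1); [lra|]; field_simplify; lra).
  assert (HQr : Q * r = P) by (unfold Q, r; field; lra).
  set (z := Rpower y Q).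
  assert (Hz0 : 0 < z) by apply Rpower_gt0.
  assert (Hzy : z < y) by (apply Rpower_base_lt1; lra).
  set (E := fun w => (Rpower (1 + 1*w) P + Rpower (1 + (-1)*w) P)/2).
  set (Dd := fun w => (Rpower (1+w) r - Rpower (1-w) r)/2).
  set (k := Dd z / Rpower z r).
  assert (Hzr : 0 < Rpower z r) by apply Rpower_gt0.
  assert (Id : Rpower (1+z) r = E z + (1 - z) * Dd z).
  { unfold E, Dd. replace (1 + 1*z) with (1+z) by ring. replace (1 + -1*z) with (1-z) by ring.
    rewrite (Rpower_split1 (1+z) P), (Rpower_split1 (1-z) P) by lra. fold r. field. }
  destruct (MVT_cor2 (fun w => Rpower (1 + 1*w) P + Rpower (1 + (-1)*w) P - (2*k) * Rpower w P)
     (fun c => P * Rpower (1 + 1*c) (P-1) * 1 + P * Rpower (1 + (-1)*c) (P-1) * (-1)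
               - (2*k) * (P * Rpower c (P-1))) z y) as [c [Hc Ic]].
  - exact Hzy.
  - intros c Hc.
    pose proof (derivable_pt_lim_minus _ _ c _ _
      (derivable_pt_lim_plus _ _ c _ _ (deriv_aff_pow 1 1 P c ltac:(lra)) (deriv_aff_pow 1 (-1) P c ltac:(lra)))
      (derivable_pt_lim_scal _ (2*k) c _ (derivable_pt_lim_power c P ltac:(lra)))) as D.
    exact D.
  - simpl in Hc.
    assert (Hc1 : 0 < c < 1) by lra.
    assert (Hmono : Dd z / Rpower z r <= Dd c / Rpower c r).
    { pose proof (ID_concave (/c - 1) (/z - 1) 2 r Hr) as HID.
      assert (/c < /z) by (apply Rinv_lt_contravar; nra).
      assert (1 < /c) by (rewrite <- Rinv_1; apply Rinv_lt_contravar; lra).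
      specialize (HID ltac:(lra) ltac:(lra)).
      rewrite !rpow_pos in HID by lra.
      replace (/c - 1 + 2) with ((1+c)/c) in HID by (field; lra).
      replace (/z - 1 + 2) with ((1+z)/z) in HID by (field; lra).
      replace (/c - 1) with ((1-c)/c) in HID by (field; lra).
      replace (/z - 1) with ((1-z)/z) in HID by (field; lra).
      rewrite !Rpower_div in HID by lra.
      unfold Dd. apply Rmult_le_reg_l with 2; [lra|].
      replace (2 * ((Rpower (1 + z) r - Rpower (1 - z) r) / 2 / Rpower z r)) with
        (Rpower (1 + z) r / Rpower z r - Rpower (1 - z) r / Rpower z r) by (field; lra).
      assert (0 < Rpower c r) by apply Rpower_gt0.
      replace (2 * ((Rpower (1 + c) r - Rpower (1 - c) r) / 2 / Rpower c r)) with
        (Rpower (1 + c) r / Rpower c r - Rpower (1 - c) r / Rpower c r) by (field; lra).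
      lra. }
    assert (Hcr : 0 < Rpower c r) by apply Rpower_gt0.
    assert (Hk : k * Rpower c r <= Dd c).
    { unfold k. apply Rmult_le_reg_r with (/ Rpower c r). apply Rinv_0_lt_compat; lra.
      rewrite Rmult_assoc, Rinv_r by lra. rewrite Rmult_1_r. exact Hmono. }
    assert (Hder : 0 <= P * Rpower (1 + 1*c) (P-1) * 1 + P * Rpower (1 + (-1)*c) (P-1) * (-1)
               - (2*k) * (P * Rpower c (P-1))).
    { replace (1 + 1*c) with (1+c) by ring. replace (1 + -1*c) with (1-c) by ring.
      fold r. unfold Dd in Hk. nra. }
    assert (Hstep : 0 <= (Rpower (1 + 1*y) P + Rpower (1 + (-1)*y) P - (2*k) * Rpower y P)
                        - (Rpower (1 + 1*z) P + Rpower (1 + (-1)*z) P - (2*k) * Rpower z P)).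
    { rewrite Hc. apply Rmult_le_pos; lra. }
    replace (1 + 1*y) with (1+y) in Hstep by ring. replace (1 + -1*y) with (1-y) in Hstep by ring.
    replace (1 + 1*z) with (1+z) in Hstep by ring. replace (1 + -1*z) with (1-z) in Hstep by ring.
    assert (Ey : Rpower y P = Rpower z r) by (unfold z; rewrite Rpower_mult; rewrite HQr; reflexivity).
    assert (Ez : Rpower z P = z * Rpower z r) by (unfold r; apply Rpower_split1; lra).
    rewrite Ey, Ez in Hstep.
    assert (Ek : 2 * k * Rpower z r - 2 * k * (z * Rpower z r) = 2 * Dd z * (1 - z)) by (unfold k; field; lra).
    rewrite Id. unfold E. replace (1 + 1*z) with (1+z) by ring. replace (1 + -1*z) with (1-z) by ring.
    lra.
Qed.

Lemma clarkson1 P y : 1 < P <= 2 -> 0 <= y <= 1 ->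
  rpow (1 + rpow y (P/(P-1))) (P-1) <= (rpow (1+y) P + rpow (1-y) P)/2.
Proof.
  intros HP [[Hy0|Hy0] [Hy1|Hy1]].
  - rewrite (rpow_pos y) by lra. rewrite (rpow_pos (1 - y)) by lra. rewrite (rpow_pos (1+y)) by lra.
    rewrite rpow_pos by (pose proof (Rpower_gt0 y (P/(P-1))); lra).
    apply clarkson_inner; lra.
  - subst. rewrite rpow_one, Rminus_diag, rpow_0.
    replace (1+1) with 2 by ring. 
    replace P with (1 + (P-1)) at 2 by ring. rewrite rpow_plus, rpow_1 by lra. lra.
  - subst. rewrite rpow_0, Rplus_0_r, Rminus_0_r, !rpow_one. lra.
  - lra.
Qed.

Lemma HC P a b : 1 < P <= 2 -> 0 <= a -> 0 <= b ->
  rpow (rpow a (P/(P-1)) + rpow b (P/(P-1))) (P-1)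
  <= (rpow (a+b) P + rpow (Rabs (a-b)) P)/2.
Proof.
  intros HP.
  set (Q := P/(P-1)).
  assert (HQr : Q * (P-1) = P) by (unfold Q; field; lra).
  assert (main : forall a b, 0 <= b <= a ->
    rpow (rpow a Q + rpow b Q) (P-1) <= (rpow (a+b) P + rpow (Rabs (a-b)) P)/2).
  { clear a b. intros a b [Hb Hba].
    destruct (Req_dec a 0) as [Ha|Ha].
    - assert (b = 0) by lra. subst. rewrite Rplus_0_r, Rminus_0_r, Rabs_R0, !rpow_0, Rplus_0_r, rpow_0. lra.
    - assert (Ha' : 0 < a) by lra.
      set (y := b / a).
      assert (Hy : 0 <= y <= 1).
      { unfold y; split. unfold Rdiv; apply Rmult_le_pos; [lra| left; apply Rinv_0_lt_compat; lra].
        apply Rmult_le_reg_r with a; [lra|]. field_simplify; lra. }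
      assert (Eb : b = a * y) by (unfold y; field; lra).
      pose proof (clarkson1 P y HP Hy) as H. fold Q in H.
      rewrite Eb.
      replace (a + a*y) with (a * (1+y)) by ring.
      replace (a - a*y) with (a * (1-y)) by ring.
      rewrite Rabs_right by nra.
      rewrite !rpow_mult by lra.
      replace (rpow a Q + rpow a Q * rpow y Q) with (rpow a Q * (1 + rpow y Q)) by ring.
      rewrite rpow_mult by (try apply rpow_nonneg; pose proof (rpow_nonneg y Q); lra).
      rewrite rpow_rpow, HQr by lra.
      assert (0 <= rpow a P) by apply rpow_nonneg.
      replace ((rpow a P * rpow (1 + y) P + rpow a P * rpow (1 - y) P) / 2)
        with (rpow a P * ((rpow (1 + y) P + rpow (1 - y) P) / 2)) by field.
      apply Rmult_le_compat_l; auto. }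
  intros Ha Hb. destruct (Rle_dec b a) as [h|h].
  - apply main; lra.
  - rewrite Rplus_comm, (Rplus_comm a b), Rabs_minus_sym. apply main; lra.
Qed.


Lemma vadd_0l (X : NormedSpace) (x : X) : vadd X (vzero X) x = x.
Proof. rewrite vadd_comm. apply vadd_0. Qed.

Lemma vscal_0 (X : NormedSpace) (x : X) : vscal X 0 x = vzero X.
Proof.
  set (s := vscal X 0 x).
  assert (E : s = vadd X s s) by (unfold s; rewrite <- vscal_distr_r; f_equal; ring).
  rewrite <- (vadd_opp X s). rewrite E at 2. rewrite <- vadd_assoc, vadd_opp, vadd_0. reflexivity.
Qed.

Lemma vopp_scal (X : NormedSpace) (x : X) : vopp X x = vscal X (-1) x.
Proof.
  assert (E : vadd X x (vscal X (-1) x) = vzero X).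
  { rewrite <- (vscal_1 X x) at 1. rewrite <- vscal_distr_r. replace (1 + -1) with 0 by ring. apply vscal_0. }
  rewrite <- (vadd_0 X (vopp X x)). rewrite <- E. rewrite vadd_assoc.
  rewrite (vadd_comm X (vopp X x) x), vadd_opp, vadd_0l. reflexivity.
Qed.

Lemma vnorm_zero (X : NormedSpace) : vnorm X (vzero X) = 0.
Proof. rewrite <- (vscal_0 X (vzero X)), vnorm_scal, Rabs_R0; ring. Qed.

Lemma vnorm_opp (X : NormedSpace) (x : X) : vnorm X (vopp X x) = vnorm X x.
Proof.
  rewrite vopp_scal, vnorm_scal.
  assert (Rabs (-1) = 1) by (unfold Rabs; destruct (Rcase_abs (-1)); lra).
  rewrite H; ring.
Qed.

Lemma vnorm_nonneg (X : NormedSpace) (x : X) : 0 <= vnorm X x.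
Proof.
  pose proof (vnorm_triangle X x (vopp X x)) as H.
  rewrite vadd_opp, vnorm_zero, vnorm_opp in H. lra.
Qed.

Lemma vsub_scal (X : NormedSpace) (x y : X) : vsub X x y = vadd X x (vscal X (-1) y).
Proof. unfold vsub. rewrite vopp_scal. reflexivity. Qed.

Lemma vadd_scal_same (X : NormedSpace) a b (u : X) : vadd X (vscal X a u) (vscal X b u) = vscal X (a+b) u.
Proof. rewrite vscal_distr_r. reflexivity. Qed.

Lemma vsub_scal_same (X : NormedSpace) a b (u : X) : vsub X (vscal X a u) (vscal X b u) = vscal X (a-b) u.
Proof. rewrite vsub_scal, vscal_assoc, vadd_scal_same. f_equal; ring. Qed.

Lemma vscal_x (X : NormedSpace) (x : X) a b : vadd X (vscal X a x) (vscal X b x) = vscal X (a+b) x.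
Proof. apply vadd_scal_same. Qed.

Lemma vsum_uv (X : NormedSpace) (x y : X) : vadd X (vadd X x y) (vsub X x y) = vscal X 2 x.
Proof.
  rewrite vsub_scal.
  rewrite <- vadd_assoc. rewrite (vadd_assoc X y x).
  rewrite (vadd_comm X y x). rewrite <- vadd_assoc.
  rewrite (vadd_assoc X x x).
  rewrite <- (vscal_1 X x) at 1 2. rewrite <- (vscal_1 X y) at 1.
  rewrite !vadd_scal_same. replace (1 + -1) with 0 by ring. rewrite vscal_0, vadd_0.
  f_equal; ring.
Qed.

Lemma vdiff_uv (X : NormedSpace) (x y : X) : vsub X (vadd X x y) (vsub X x y) = vscal X 2 y.
Proof.
  rewrite !vsub_scal.
  rewrite vscal_distr_l, vscal_assoc.
  rewrite <- (vscal_1 X x) at 1. rewrite <- (vscal_1 X y) at 1.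
  rewrite <- vadd_assoc. rewrite (vadd_assoc X (vscal X 1 y) (vscal X (-1) x)).
  rewrite (vadd_comm X (vscal X 1 y) (vscal X (-1) x)). rewrite <- vadd_assoc.
  rewrite (vadd_assoc X (vscal X 1 x)).
  rewrite !vadd_scal_same. replace (1 + -1) with 0 by ring. rewrite vscal_0, vadd_0l.
  f_equal; ring.
Qed.


Definition RK (t p K : R) : Prop := forall a b, 0 <= a -> 0 <= b ->
  rpow ((rpow (a+b) p + rpow (Rabs (a-b)) p)/2) (1/p) <= rpow (rpow a t + rpow (Rabs K * b) t) (1/t).
Definition RKs (r q K : R) : Prop := forall a b, 0 <= a -> 0 <= b ->
  rpow ((rpow (a+b) q + rpow (Rabs (a-b)) q)/2) (1/q) >= rpow (rpow a r + rpow (Rabs (/K) * b) r) (1/r).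


Lemma K_of_R (V : Type) (add sub : V -> V -> V) (scal : R -> V -> V) (nrm : V -> R) (Hnn : forall x, 0 <= nrm x) (Hsc : forall c x, nrm (scal c x) = Rabs c * nrm x) t p K : 0 < p ->
  (forall x y, rpow (nrm (add x y)) p + rpow (nrm (sub x y)) p <=
               rpow (nrm x + nrm y) p + rpow (Rabs (nrm x - nrm y)) p) ->
  RK t p K -> K_valid add sub scal nrm t p K.
Proof.
  intros Hp HH HR x y. rewrite Hsc.
  eapply Rle_trans; [| apply HR; auto].
  apply rpow_le; [| apply Rdiv_lt_0_compat; lra].
  split. pose proof (rpow_nonneg (nrm (add x y)) p); pose proof (rpow_nonneg (nrm (sub x y)) p); lra.
  specialize (HH x y). lra.
Qed.

Lemma Ks_of_R (V : Type) (add sub : V -> V -> V) (scal : R -> V -> V) (nrm : V -> R) (Hnn : forall x, 0 <= nrm x) (Hsc : forall c x, nrm (scal c x) = Rabs c * nrm x) r q K : 0 < q ->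
  (forall x y, rpow (nrm (add x y)) q + rpow (nrm (sub x y)) q >=
               rpow (nrm x + nrm y) q + rpow (Rabs (nrm x - nrm y)) q) ->
  RKs r q K -> Kstar_valid add sub scal nrm r q K.
Proof.
  intros Hq HH HR x y. rewrite Hsc.
  apply Rle_ge. eapply Rle_trans; [apply Rge_le, HR; auto|].
  apply rpow_le; [| apply Rdiv_lt_0_compat; lra].
  split. pose proof (rpow_nonneg (nrm x + nrm y) q); pose proof (rpow_nonneg (Rabs (nrm x - nrm y)) q); lra.
  specialize (HH x y). lra.
Qed.

Definition has_line (V : Type) (add sub : V -> V -> V) (scal : R -> V -> V) (nrm : V -> R) := exists u, nrm u = 1 /\
  (forall a b, nrm (add (scal a u) (scal b u)) = Rabs (a+b)) /\
  (forall a b, nrm (sub (scal a u) (scal b u)) = Rabs (a-b)).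

Lemma R_of_K (V : Type) (add sub : V -> V -> V) (scal : R -> V -> V) (nrm : V -> R) (Hsc : forall c x, nrm (scal c x) = Rabs c * nrm x) t p K : has_line V add sub scal nrm -> K_valid add sub scal nrm t p K -> RK t p K.
Proof.
  intros [u [Hu [Ha Hs]]] HK a b Hpa Hpb.
  specialize (HK (scal a u) (scal b u)). rewrite Ha, Hs, !Hsc, Hu in HK.
  rewrite (Rabs_right (a+b)) in HK by lra. rewrite (Rabs_right a) in HK by lra.
  rewrite (Rabs_right b) in HK by lra.
  rewrite !Rmult_1_r in HK. exact HK.
Qed.

Lemma R_of_Ks (V : Type) (add sub : V -> V -> V) (scal : R -> V -> V) (nrm : V -> R) (Hsc : forall c x, nrm (scal c x) = Rabs c * nrm x) r q K : has_line V add sub scal nrm -> Kstar_valid add sub scal nrm r q K -> RKs r q K.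
Proof.
  intros [u [Hu [Ha Hs]]] HK a b Hpa Hpb.
  specialize (HK (scal a u) (scal b u)). rewrite Ha, Hs, !Hsc, Hu in HK.
  rewrite (Rabs_right (a+b)) in HK by lra. rewrite (Rabs_right a) in HK by lra.
  rewrite (Rabs_right b) in HK by lra.
  rewrite !Rmult_1_r in HK. exact HK.
Qed.


Lemma cabs_nonneg z : 0 <= cabs z.
Proof. unfold cabs. apply sqrt_pos. Qed.

Lemma cabs_sq z : cabs z * cabs z = fst z * fst z + snd z * snd z.
Proof. unfold cabs. apply sqrt_sqrt. nra. Qed.

Lemma cabs_scal c z : cabs (cscal c z) = Rabs c * cabs z.
Proof.
  unfold cabs, cscal; simpl.
  replace (c * fst z * (c * fst z) + c * snd z * (c * snd z)) with
    ((c*c) * (fst z * fst z + snd z * snd z)) by ring.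
  rewrite sqrt_mult by nra. f_equal. rewrite <- (sqrt_Rsqr_abs c). reflexivity.
Qed.

Lemma cline : has_line Cc cadd csub cscal cabs.
Proof.
  exists (1,0). unfold cabs, cadd, csub, cscal; simpl. split; [|split].
  - replace (1*1+0*0) with 1 by ring. apply sqrt_1.
  - intros a b. replace ((a * 1 + b * 1) * (a * 1 + b * 1) + (a * 0 + b * 0) * (a * 0 + b * 0))
      with (Rsqr (a+b)) by (unfold Rsqr; ring). apply sqrt_Rsqr_abs.
  - intros a b. replace ((a * 1 - b * 1) * (a * 1 - b * 1) + (a * 0 - b * 0) * (a * 0 - b * 0))
      with (Rsqr (a-b)) by (unfold Rsqr; ring). apply sqrt_Rsqr_abs.
Qed.

Lemma rpow_sq s e : 0 <= s -> rpow s e = rpow (s*s) (e/2).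
Proof. intro H. rewrite rpow_mult, <- rpow_plus by auto. f_equal; field. Qed.

Lemma channer_data z w :
  let A := cabs z * cabs z + cabs w * cabs w in
  let B := 2 * (cabs z * cabs w) in
  let c := 2 * (fst z * fst w + snd z * snd w) in
  cabs (cadd z w) * cabs (cadd z w) = A + c /\
  cabs (csub z w) * cabs (csub z w) = A - c /\
  (cabs z + cabs w) * (cabs z + cabs w) = A + B /\
  Rabs (cabs z - cabs w) * Rabs (cabs z - cabs w) = A - B /\
  Rabs c <= B /\ B <= A.
Proof.
  intros A B c. unfold A, B, c.
  pose proof (cabs_sq z) as Hz. pose proof (cabs_sq w) as Hw.
  pose proof (cabs_nonneg z). pose proof (cabs_nonneg w).
  split. { rewrite (cabs_sq (cadd z w)), Hz, Hw. unfold cadd; simpl; ring. }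
  split. { rewrite (cabs_sq (csub z w)), Hz, Hw. unfold csub; simpl; ring. }
  split; [ring|].
  split. { rewrite <- Rabs_mult, Rabs_right. ring. pose proof (Rle_0_sqr (cabs z - cabs w)); unfold Rsqr in *; lra. }
  split.
  - assert (Hcs : (fst z * fst w + snd z * snd w) * (fst z * fst w + snd z * snd w)
             <= (cabs z * cabs w) * (cabs z * cabs w)).
    { replace ((cabs z * cabs w) * (cabs z * cabs w)) with ((cabs z * cabs z) * (cabs w * cabs w)) by ring.
      rewrite Hz, Hw. pose proof (Rle_0_sqr (fst z * snd w - snd z * fst w)). unfold Rsqr in *. nra. }
    assert (Habs : Rabs (fst z * fst w + snd z * snd w) <= Rabs (cabs z * cabs w))
      by (apply Rsqr_le_abs_0; unfold Rsqr; exact Hcs).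
    rewrite (Rabs_right (cabs z * cabs w)) in Habs by (apply Rle_ge; apply Rmult_le_pos; auto).
    rewrite Rabs_mult, Rabs_right by lra. lra.
  - pose proof (Rle_0_sqr (cabs z - cabs w)). unfold Rsqr in *. nra.
Qed.

Lemma channer_t e : 0 < e <= 2 -> forall z w,
  rpow (cabs (cadd z w)) e + rpow (cabs (csub z w)) e >=
  rpow (cabs z + cabs w) e + rpow (Rabs (cabs z - cabs w)) e.
Proof.
  intros He z w. destruct (channer_data z w) as [E1 [E2 [E3 [E4 [H5 H6]]]]].
  pose proof (cabs_nonneg z). pose proof (cabs_nonneg w). pose proof (cabs_nonneg (cadd z w)).
  pose proof (cabs_nonneg (csub z w)).
  rewrite (rpow_sq (cabs (cadd z w))), (rpow_sq (cabs (csub z w))), (rpow_sq (cabs z + cabs w)),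
    (rpow_sq (Rabs (cabs z - cabs w))) by (try apply Rabs_pos; lra).
  rewrite E1, E2, E3, E4. apply Rle_ge. apply maj_concave; auto. split; lra.
Qed.

Lemma channer_r e : 2 <= e -> forall z w,
  rpow (cabs (cadd z w)) e + rpow (cabs (csub z w)) e <=
  rpow (cabs z + cabs w) e + rpow (Rabs (cabs z - cabs w)) e.
Proof.
  intros He z w. destruct (channer_data z w) as [E1 [E2 [E3 [E4 [H5 H6]]]]].
  pose proof (cabs_nonneg z). pose proof (cabs_nonneg w). pose proof (cabs_nonneg (cadd z w)).
  pose proof (cabs_nonneg (csub z w)).
  rewrite (rpow_sq (cabs (cadd z w))), (rpow_sq (cabs (csub z w))), (rpow_sq (cabs z + cabs w)),
    (rpow_sq (Rabs (cabs z - cabs w))) by (try apply Rabs_pos; lra).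
  rewrite E1, E2, E3, E4. apply maj_convex; auto. lra.
Qed.

Lemma X_line (X : NormedSpace) : (exists x : X, x <> vzero X) ->
  has_line X (vadd X) (vsub X) (vscal X) (vnorm X).
Proof.
  intros [x0 Hx0].
  assert (Hn : 0 < vnorm X x0).
  { destruct (vnorm_nonneg X x0) as [h|h]; auto. exfalso. apply Hx0. apply vnorm_eq0. auto. }
  exists (vscal X (/ vnorm X x0) x0). split; [|split].
  - rewrite vnorm_scal. rewrite Rabs_right by (apply Rle_ge; left; apply Rinv_0_lt_compat; auto).
    field; lra.
  - intros a b. rewrite vadd_scal_same, vnorm_scal, vnorm_scal.
    rewrite (Rabs_right (/ _)) by (apply Rle_ge; left; apply Rinv_0_lt_compat; auto).
    field; lra.
  - intros a b. rewrite vsub_scal_same, vnorm_scal, vnorm_scal.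
    rewrite (Rabs_right (/ _)) by (apply Rle_ge; left; apply Rinv_0_lt_compat; auto).
    field; lra.
Qed.

Lemma best_K_equiv {V W : Type} (a1 s1 : V -> V -> V) (c1 : R -> V -> V) (n1 : V -> R)
  (a2 s2 : W -> W -> W) (c2 : R -> W -> W) (n2 : W -> R) t p :
  (forall K, K_valid a1 s1 c1 n1 t p K <-> K_valid a2 s2 c2 n2 t p K) ->
  forall k, is_best_K a1 s1 c1 n1 t p k <-> is_best_K a2 s2 c2 n2 t p k.
Proof.
  intros HE k. unfold is_best_K. split; intros [H1 [H2 H3]]; split; auto; split.
  - apply HE; auto.
  - intros k' Hk' Hv. apply H3; auto. apply HE; auto.
  - apply HE; auto.
  - intros k' Hk' Hv. apply H3; auto. apply HE; auto.
Qed.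

Lemma best_Ks_equiv {V W : Type} (a1 s1 : V -> V -> V) (c1 : R -> V -> V) (n1 : V -> R)
  (a2 s2 : W -> W -> W) (c2 : R -> W -> W) (n2 : W -> R) t p :
  (forall K, Kstar_valid a1 s1 c1 n1 t p K <-> Kstar_valid a2 s2 c2 n2 t p K) ->
  forall k, is_best_Kstar a1 s1 c1 n1 t p k <-> is_best_Kstar a2 s2 c2 n2 t p k.
Proof.
  intros HE k. unfold is_best_Kstar. split; intros [H1 [H2 H3]]; split; auto; split.
  - apply HE; auto.
  - intros k' Hk' Hv. apply H3; auto. apply HE; auto.
  - apply HE; auto.
  - intros k' Hk' Hv. apply H3; auto. apply HE; auto.
Qed.

Lemma part_i_a (X : NormedSpace) (hX : exists x : X, x <> vzero X) t q :
  1 < t <= 2 -> hanner_t X t -> 2 <= q ->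
  forall k, is_Kstar_rq X q t k <-> is_Cstar q t k.
Proof.
  intros Ht HH Hq. unfold is_Kstar_rq, is_Cstar. apply best_Ks_equiv.
  intro K. split; intro Hv.
  - apply Ks_of_R; [apply cabs_nonneg | apply cabs_scal | lra | apply channer_t; lra |].
    apply (R_of_Ks X (vadd X) (vsub X) (vscal X) (vnorm X) (vnorm_scal X)); auto. apply X_line; auto.
  - apply Ks_of_R; [apply vnorm_nonneg | apply vnorm_scal | lra | exact HH |].
    apply (R_of_Ks Cc cadd csub cscal cabs cabs_scal); auto. apply cline.
Qed.

Lemma part_ii_a (X : NormedSpace) (hX : exists x : X, x <> vzero X) r p :
  2 <= r -> hanner_r X r -> 1 < p <= 2 ->
  forall k, is_K_tp X p r k <-> is_C p r k.
Proof.
  intros Hr HH Hp. unfold is_K_tp, is_C. apply best_K_equiv.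
  intro K. split; intro Hv.
  - apply K_of_R; [apply cabs_nonneg | apply cabs_scal | lra | apply channer_r; lra |].
    apply (R_of_K X (vadd X) (vsub X) (vscal X) (vnorm X) (vnorm_scal X)); auto. apply X_line; auto.
  - apply K_of_R; [apply vnorm_nonneg | apply vnorm_scal | lra | exact HH |].
    apply (R_of_K Cc cadd csub cscal cabs cabs_scal); auto. apply cline.
Qed.

Lemma rpow_two_mul a e : 0 <= a -> rpow (2*a) e = rpow 2 e * rpow a e.
Proof. intro; apply rpow_mult; lra. Qed.

Lemma rpow_two_split e : rpow 2 e = 2 * rpow 2 (e - 1).
Proof. replace e with (1 + (e-1)) at 1 by ring. rewrite rpow_plus, rpow_1 by lra. ring. Qed.

Lemma rpow_self_avg b p : 0 <= b -> p <> 0 -> rpow ((rpow b p + rpow b p)/2) (1/p) = b.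
Proof.
  intros Hb Hp. replace ((rpow b p + rpow b p)/2) with (rpow b p) by field.
  rewrite rpow_rpow by auto. replace (p * (1/p)) with 1 by (field; auto). apply rpow_1; auto.
Qed.

Lemma zero_add (X : NormedSpace) (y : X) : vnorm X (vadd X (vzero X) y) = vnorm X y.
Proof. rewrite vadd_0l. reflexivity. Qed.

Lemma zero_sub (X : NormedSpace) (y : X) : vnorm X (vsub X (vzero X) y) = vnorm X y.
Proof. unfold vsub. rewrite vadd_0l. apply vnorm_opp. Qed.

Lemma nonzero_norm (X : NormedSpace) : (exists x : X, x <> vzero X) -> exists y : X, 0 < vnorm X y.
Proof.
  intros [x0 Hx0]. exists x0.
  destruct (vnorm_nonneg X x0) as [h|h]; auto. exfalso. apply Hx0. apply vnorm_eq0. auto.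
Qed.

Lemma part_i_b (X : NormedSpace) (hX : exists x : X, x <> vzero X) t p :
  1 < t <= 2 -> hanner_t X t -> 1 < p <= t / (t - 1) -> is_K_tp X t p 1.
Proof.
  intros Ht HH Hp. set (T' := t/(t-1)).
  assert (HT' : 0 < T') by (unfold T'; apply Rdiv_lt_0_compat; lra).
  split; [lra|split].
  - intros x y. rewrite vscal_1.
    set (al := vnorm X (vadd X x y)). set (be := vnorm X (vsub X x y)).
    set (a := vnorm X x). set (b := vnorm X y).
    assert (Hal : 0 <= al) by apply vnorm_nonneg. assert (Hbe : 0 <= be) by apply vnorm_nonneg.
    assert (Ha : 0 <= a) by apply vnorm_nonneg. assert (Hb : 0 <= b) by apply vnorm_nonneg.
    eapply Rle_trans. { apply (power_mean al be p T'); auto. unfold T'; lra. }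
    pose proof (HH (vadd X x y) (vsub X x y)) as Hh.
    rewrite vsum_uv, vdiff_uv, !vnorm_scal in Hh. fold al be a b in Hh.
    rewrite Rabs_right in Hh by lra.
    rewrite !rpow_two_mul in Hh by auto.
    pose proof (HC t al be Ht Hal Hbe) as Hc. fold T' in Hc.
    set (S := rpow al T' + rpow be T') in *.
    set (T := rpow a t + rpow b t).
    assert (HS : 0 <= S) by (unfold S; pose proof (rpow_nonneg al T'); pose proof (rpow_nonneg be T'); lra).
    assert (HT : 0 <= T) by (unfold T; pose proof (rpow_nonneg a t); pose proof (rpow_nonneg b t); lra).
    assert (H2 : 0 < rpow 2 (t-1)) by (apply rpow_gt0; lra).
    assert (Hst : rpow S (t-1) <= rpow 2 (t-1) * T).
    { rewrite (rpow_two_split t) in Hh. unfold T. lra. }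
    assert (Hst2 : rpow (S/2) (t-1) <= T).
    { rewrite rpow_div by lra. apply Rmult_le_reg_r with (rpow 2 (t-1)); auto.
      field_simplify; lra. }
    replace (rpow (S/2) (1/T')) with (rpow (rpow (S/2) (t-1)) (1/t)).
    + apply rpow_le; [split; [apply rpow_nonneg| exact Hst2] | apply Rdiv_lt_0_compat; lra].
    + rewrite rpow_rpow by lra. f_equal. unfold T'. field. lra.
  - intros k' Hk' Hv.
    destruct (nonzero_norm X hX) as [y Hy].
    specialize (Hv (vzero X) y). rewrite zero_add, zero_sub, vnorm_zero, vnorm_scal in Hv.
    rewrite rpow_self_avg in Hv by lra. rewrite rpow_0, Rplus_0_l in Hv.
    rewrite rpow_rpow in Hv by (apply Rmult_le_pos; [apply Rabs_pos|lra]).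
    replace (t * (1/t)) with 1 in Hv by (field; lra).
    rewrite rpow_1 in Hv by (apply Rmult_le_pos; [apply Rabs_pos|lra]).
    rewrite Rabs_right in Hv by lra.
    apply Rmult_le_reg_r with (vnorm X y); auto. lra.
Qed.

Lemma maxmin_sum al be P : 0 <= al -> 0 <= be ->
  rpow ((al+be) + Rabs (al-be)) P + rpow (Rabs ((al+be) - Rabs (al-be))) P
  = rpow (2*al) P + rpow (2*be) P.
Proof.
  intros Ha Hb. destruct (Rle_dec be al) as [h|h].
  - rewrite (Rabs_right (al-be)) by lra.
    replace (al + be + (al - be)) with (2*al) by ring.
    replace (al + be - (al - be)) with (2*be) by ring. rewrite Rabs_right by lra. reflexivity.
  - rewrite (Rabs_left (al-be)) by lra.
    replace (al + be + - (al - be)) with (2*be) by ring.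
    replace (al + be - - (al - be)) with (2*al) by ring. rewrite Rabs_right by lra. ring.
Qed.

Lemma part_ii_b (X : NormedSpace) (hX : exists x : X, x <> vzero X) r q :
  2 <= r -> hanner_r X r -> r / (r - 1) <= q -> is_Kstar_rq X r q 1.
Proof.
  intros Hr HH Hq. set (P := r/(r-1)).
  assert (HP : 1 < P <= 2).
  { unfold P. split.
    - apply Rmult_lt_reg_r with (r-1); [lra|]. field_simplify; lra.
    - apply Rmult_le_reg_r with (r-1); [lra|]. field_simplify; lra. }
  assert (HPQ : P / (P - 1) = r) by (unfold P; field; lra).
  assert (Hq1 : 1 < q) by (unfold P in HP; lra).
  split; [lra|split].
  - intros x y. rewrite Rinv_1, vscal_1. apply Rle_ge.
    set (al := vnorm X (vadd X x y)). set (be := vnorm X (vsub X x y)).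
    set (a := vnorm X x). set (b := vnorm X y).
    assert (Hal : 0 <= al) by apply vnorm_nonneg. assert (Hbe : 0 <= be) by apply vnorm_nonneg.
    assert (Ha : 0 <= a) by apply vnorm_nonneg. assert (Hb : 0 <= b) by apply vnorm_nonneg.
    eapply Rle_trans; [| apply (power_mean al be P q); auto; unfold P in *; lra].
    pose proof (HH (vadd X x y) (vsub X x y)) as Hh.
    rewrite vsum_uv, vdiff_uv, !vnorm_scal in Hh. fold al be a b in Hh.
    rewrite Rabs_right in Hh by lra.
    rewrite !rpow_two_mul in Hh by auto.
    pose proof (HC P (al+be) (Rabs (al-be)) HP ltac:(lra) (Rabs_pos _)) as Hc.
    rewrite HPQ, maxmin_sum in Hc by auto.
    rewrite !rpow_two_mul in Hc by auto.
    set (U := rpow (al+be) r + rpow (Rabs (al-be)) r) in *.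
    set (S := rpow al P + rpow be P).
    set (T := rpow a r + rpow b r).
    assert (HS : 0 <= S) by (unfold S; pose proof (rpow_nonneg al P); pose proof (rpow_nonneg be P); lra).
    assert (HT : 0 <= T) by (unfold T; pose proof (rpow_nonneg a r); pose proof (rpow_nonneg b r); lra).
    assert (HU : rpow 2 r * T <= U) by (unfold T; lra).
    assert (H2 : 0 < rpow 2 (P-1)) by (apply rpow_gt0; lra).
    assert (H2r : 0 < rpow 2 r) by (apply rpow_gt0; lra).
    assert (HUP : rpow U (P-1) <= rpow 2 (P-1) * S).
    { rewrite (rpow_two_split P) in Hc. unfold S. lra. }
    assert (HTU : rpow (rpow 2 r * T) (P-1) <= rpow U (P-1)).
    { apply rpow_le; [split; [apply Rmult_le_pos; lra | exact HU] | lra]. }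
    rewrite rpow_mult in HTU by lra. rewrite rpow_rpow in HTU by lra.
    replace (r * (P-1)) with P in HTU by (unfold P; field; lra).
    rewrite (rpow_two_split P) in HTU.
    assert (HT2 : rpow T (P-1) <= S/2).
    { apply Rmult_le_reg_l with (2 * rpow 2 (P-1)); [lra|].
      replace (2 * rpow 2 (P - 1) * (S / 2)) with (rpow 2 (P-1) * S) by field. lra. }
    replace (rpow T (1/r)) with (rpow (rpow T (P-1)) (1/P)).
    + apply rpow_le; [split; [apply rpow_nonneg| exact HT2] | apply Rdiv_lt_0_compat; lra].
    + rewrite rpow_rpow by lra. f_equal. unfold P. field. lra.
  - intros k' Hk' Hv.
    destruct (nonzero_norm X hX) as [y Hy].
    specialize (Hv (vzero X) y). rewrite zero_add, zero_sub, vnorm_zero, vnorm_scal in Hv.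
    rewrite rpow_self_avg in Hv by lra. rewrite rpow_0, Rplus_0_l in Hv.
    rewrite rpow_rpow in Hv by (apply Rmult_le_pos; [apply Rabs_pos|lra]).
    replace (r * (1/r)) with 1 in Hv by (field; lra).
    rewrite rpow_1 in Hv by (apply Rmult_le_pos; [apply Rabs_pos|lra]).
    rewrite Rabs_right in Hv by (apply Rle_ge; left; apply Rinv_0_lt_compat; lra).
    assert (/k' <= 1).
    { apply Rmult_le_reg_r with (vnorm X y); auto. lra. }
    apply Rmult_le_reg_r with (/k'). apply Rinv_0_lt_compat; lra.
    rewrite Rinv_r by lra. lra.
Qed.


Theorem proposition3p5 (X : NormedSpace) (hX : exists x : X, x <> vzero X) :
  (forall t : R, 1 < t <= 2 -> hanner_t X t ->
     (forall q : R, 2 <= q -> forall k : R, is_Kstar_rq X q t k <-> is_Cstar q t k)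
     /\ (forall p : R, 1 < p <= t / (t - 1) -> is_K_tp X t p 1))
  /\
  (forall r : R, 2 <= r -> hanner_r X r ->
     (forall p : R, 1 < p <= 2 -> forall k : R, is_K_tp X p r k <-> is_C p r k)
     /\ (forall q : R, r / (r - 1) <= q -> is_Kstar_rq X r q 1)).
Proof.
  split.
  - intros t Ht HH. split.
    + intros q Hq k. apply part_i_a; auto.
    + intros p Hp. apply part_i_b; auto.
  - intros r Hr HH. split.
    + intros p Hp k. apply part_ii_a; auto.
    + intros q Hq. apply part_ii_b; auto.
Qed.
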